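(* Assume (A1)–(A2) below and let $C_1,C_2,C_3\ge0$ be constants depending only on the bounds in (A1)–(A2). Let $\varepsilon,\hat\varepsilon\in[0,\bar\varepsilon]$, $\gamma,\hat\gamma\in[\underline\gamma,\bar\gamma]$, and let $\hat w:[0,T]\times(0,\ell)\to[-\bar w,\bar w]$ with $\partial_\tau\hat w,\partial_x\hat w\in L^\infty(0,T;L^2(0,\ell))$. Define $\hat e_1=0$, $\hat e_2=(\varepsilon^2-\hat\varepsilon^2)(\partial_\tau\hat w+\tfrac12\partial_x|\hat w|^2)+(\gamma-\hat\gamma)|\hat w|\hat w$ and $\mathcal{P}(\hat{\boldsymbol e})=C_1\|\hat e_1\|_{L^2}^2+C_2\|\hat e_2\|_{L^2}^2+C_3\|\hat e_2\|_{L^{3/2}}^{3/2}$ (norms on $(0,\ell)$ at a fixed time). Then for all times $$\mathcal{P}(\hat{\boldsymbol e})\le\hat C_3'|\varepsilon^2-\hat\varepsilon^2|^{3/2}+\hat C_3''|\gamma-\hat\gamma|^{3/2},$$ with constants $\hat C_3',\hat C_3''$ depending only on the bounds in (A1)–(A2) and on $\|\partial_\tau\hat w\|_{L^\infty(0,T;L^2)}$ and $\|\partial_x\hat w\|_{L^\infty(0,T;L^2)}$.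
   Context: (A1): positive constants $\underline\rho\le\bar\rho$, $\bar w$, $\bar\varepsilon$, a smooth strictly convex $P$ with $\rho P''(\rho)\ge4\bar\varepsilon^2\bar w^2$ for $\underline\rho\le\rho\le\bar\rho$; the cross section satisfies $0<\underline a\le a\le\bar a$ on $(0,\ell)$; $|gz|\le\bar g\bar z$. (A2): $0\le\varepsilon,\hat\varepsilon\le\bar\varepsilon$, $0<\underline\gamma\le\gamma,\hat\gamma\le\bar\gamma$, and velocities are bounded by $\bar w$ in absolute value. Here $\hat{\boldsymbol e}=(\hat e_1,\hat e_2)$ is the residual obtained when a solution with parameters $(\hat\varepsilon,\hat\gamma)$ of the rescaled gas equations is inserted into the equations with parameters $(\varepsilon,\gamma)$. *)

(* Defs.v *)
From HB Require Import structures.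
From mathcomp Require Import all_boot all_order all_algebra.
From mathcomp Require Import all_classical all_reals all_analysis.
Set Implicit Arguments. Unset Strict Implicit. Unset Printing Implicit Defensive.
Import Order.TTheory GRing.Theory Num.Theory.
Local Open Scope classical_set_scope.
Local Open Scope ring_scope.

(* Residual components of the rescaled gas equations (pointwise in (t,x)).
   wt, wx stand for d_tau w and d_x w;  (1/2) d_x |w|^2 = w * d_x w. *)
Definition resid_e1 {R : realType} (w wt wx : R -> R -> R) (t x : R) : R := 0.

Definition resid_e2 {R : realType} (eps heps gam hgam : R)
  (w wt wx : R -> R -> R) (t x : R) : R :=
  (eps ^+ 2 - heps ^+ 2) * (wt t x + w t x * wx t x)
  + (gam - hgam) * `|w t x| * w t x.

Definition Lp_pow {R : realType} (l p : R) (f : R -> R) : \bar R :=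
  (\int[@lebesgue_measure R]_(x in `]0%R, l[%classic) ((`|f x| `^ p)%:E))%E.

Definition Pe {R : realType} (l C1 C2 C3 : R) (e1 e2 : R -> R) : \bar R :=
  (C1%:E * Lp_pow l 2 e1 + C2%:E * Lp_pow l 2 e2
   + C3%:E * Lp_pow l (3 / 2) e2)%E.

(* ACL description of the weak partial derivatives of w on [0,T] x (0,l):
   on a.e. horizontal / vertical line, w is the integral of wx / wt. *)
Definition weak_partials {R : realType} (T l : R) (w wt wx : R -> R -> R) : Prop :=
  {ae @lebesgue_measure R, forall t, t \in `]0, T[ ->
     measurable_fun `]0, l[ (wx t) /\
     (forall x y, x \in `]0, l[ -> y \in `]0, l[ -> x <= y ->
        (w t y - w t x)%:E = (\int[@lebesgue_measure R]_(s in `[x, y]%classic) (wx t s)%:E)%E)}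
  /\
  {ae @lebesgue_measure R, forall x, x \in `]0, l[ ->
     measurable_fun `[0, T] (fun s => wt s x) /\
     (forall s u, s \in `[0, T] -> u \in `[0, T] -> s <= u ->
        (w u x - w s x)%:E = (\int[@lebesgue_measure R]_(r in `[s, u]%classic) (wt r x)%:E)%E)}.

(* Main.v *)
Require Import Defs.
From HB Require Import structures.
From mathcomp Require Import all_boot all_order all_algebra.
From mathcomp Require Import all_classical all_reals all_analysis.
From mathcomp Require Import measurable_realfun ring lra.
Import Order.TTheory GRing.Theory Num.Theory.
Local Open Scope classical_set_scope.
Local Open Scope ring_scope.

Lemma pow32E (R : realType) (y : R) : 0 <= y -> y `^ (3/2) = (Num.sqrt y) ^+ 3.
Proof.
move=> y0; rewrite mulrC powRrM powR12_sqrt // powR_mulrn // sqrtr_ge0.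
Qed.

Lemma pow2E (R : realType) (y : R) : 0 <= y -> y `^ 2 = y ^+ 2.
Proof. by move=> y0; rewrite powR_mulrn. Qed.

Lemma sqrt_sum (R : realType) (E p q : R) : 0 <= p -> 0 <= q -> 0 <= E ->
  E <= p ^+ 2 + q ^+ 2 -> E * Num.sqrt E <= 2 * (p ^+ 3 + q ^+ 3).
Proof.
move=> p0 q0 E0 Ep.
have hs : Num.sqrt E <= p + q.
  rewrite -(@ger0_norm _ (p + q)) ?addr_ge0 // -sqrtr_sqr ler_sqrt //.
  - by apply: (le_trans Ep); nra.
  - exact: sqr_ge0.
have s0 : 0 <= Num.sqrt E := sqrtr_ge0 E.
have : E * Num.sqrt E <= (p ^+ 2 + q ^+ 2) * (p + q).
  by apply: ler_pM => //.
move=> h; apply: (le_trans h).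
have : 0 <= (p - q) ^+ 2 * (p + q) by apply: mulr_ge0; [exact: sqr_ge0| lra].
nra.
Qed.

Lemma cube_le (R : realType) (g : R) : 0 <= g -> g ^+ 3 <= 1 + g ^+ 4.
Proof.
move=> g0; case: (lerP g 1) => h.
  have : g ^+ 3 <= 1 by rewrite exprn_ile1.
  have : 0 <= g ^+ 4 by rewrite exprn_ge0.
  lra.
have : g ^+ 3 <= g ^+ 4 by rewrite ler_eXn2l //; lra.
lra.
Qed.

Lemma gsq {R : realType} (A B W : R) : 0 <= A -> 0 <= B -> 0 <= W ->
  (A + W * B) ^+ 2 <= 2 * (1 + W ^+ 2) * (A ^+ 2 + B ^+ 2).
Proof.
move=> A0 B0 W0.
have h1 : (A + W * B) ^+ 2 <= 2 * A ^+ 2 + 2 * (W ^+ 2 * B ^+ 2).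
  have := sqr_ge0 (A - W * B); nra.
have h2 : A ^+ 2 + W ^+ 2 * B ^+ 2 <= (1 + W ^+ 2) * (A ^+ 2 + B ^+ 2).
  have -> : (1 + W ^+ 2) * (A ^+ 2 + B ^+ 2) = A ^+ 2 + W ^+ 2 * B ^+ 2 + (B ^+ 2 + W ^+ 2 * A ^+ 2) by ring.
  rewrite lerDl addr_ge0 ?mulr_ge0 ?sqr_ge0 //.
lra.
Qed.

Lemma core2 (R : realType) (al be A B W eb gh E : R) :
  0 <= al -> al <= eb -> 0 <= be -> be ^+ 2 <= gh -> 0 <= A -> 0 <= B -> 0 <= W ->
  0 <= E -> E <= al ^+ 2 * (A + W * B) + be ^+ 2 * W ^+ 2 ->
  E ^+ 2 <= 8 * (1 + eb) * (1 + W ^+ 2) * al ^+ 3 * (1 + A ^+ 2 + B ^+ 2)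
            + 4 * (1 + gh) * (1 + W ^+ 4) * be ^+ 3.
Proof.
move=> a0 ae b0 bg A0 B0 W0 E0 EE.
set g := A + W * B.
have g0 : 0 <= g by rewrite /g; nra.
set u := al ^+ 2 * g; set v := be ^+ 2 * W ^+ 2.
have u0 : 0 <= u by rewrite /u; nra.
have v0 : 0 <= v by rewrite /v; nra.
have h1 : E ^+ 2 <= 2 * u ^+ 2 + 2 * v ^+ 2.
  have : E ^+ 2 <= (u + v) ^+ 2 by rewrite ler_pXn2r ?nnegrE //; lra.
  have := sqr_ge0 (u - v); nra.
have a3 : 0 <= al ^+ 3 by rewrite exprn_ge0.
have b3 : 0 <= be ^+ 3 by rewrite exprn_ge0.
have hu : u ^+ 2 <= eb * al ^+ 3 * g ^+ 2.
  have -> : u ^+ 2 = al * (al ^+ 3 * g ^+ 2) by rewrite /u; ring.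
  rewrite -mulrA ler_wpM2r //; apply: mulr_ge0 => //; exact: sqr_ge0.
have hg := @gsq R A B W A0 B0 W0.
have hu2 : eb * al ^+ 3 * g ^+ 2 <= eb * al ^+ 3 * (2 * (1 + W ^+ 2) * (A ^+ 2 + B ^+ 2)).
  rewrite ler_wpM2l // mulr_ge0 //; lra.
have hu3 : 2 * (eb * al ^+ 3 * (2 * (1 + W ^+ 2) * (A ^+ 2 + B ^+ 2)))
    <= 8 * (1 + eb) * (1 + W ^+ 2) * al ^+ 3 * (1 + A ^+ 2 + B ^+ 2).
  have -> : 2 * (eb * al ^+ 3 * (2 * (1 + W ^+ 2) * (A ^+ 2 + B ^+ 2)))
     = (al ^+ 3 * (1 + W ^+ 2)) * (4 * eb * (A ^+ 2 + B ^+ 2)) by ring.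
  have -> : 8 * (1 + eb) * (1 + W ^+ 2) * al ^+ 3 * (1 + A ^+ 2 + B ^+ 2)
     = (al ^+ 3 * (1 + W ^+ 2)) * (8 * (1 + eb) * (1 + A ^+ 2 + B ^+ 2)) by ring.
  have e0 : 0 <= eb by lra.
  have w2 : 0 <= 1 + W ^+ 2 by have := sqr_ge0 W; lra.
  rewrite ler_wpM2l ?mulr_ge0 //.
  have := sqr_ge0 A; have := sqr_ge0 B; nra.
have hv : v ^+ 2 <= (1 + gh) * W ^+ 4 * be ^+ 3.
  have -> : v ^+ 2 = be * (W ^+ 4 * be ^+ 3) by rewrite /v; ring.
  rewrite -mulrA ler_wpM2r // ?mulr_ge0 ?exprn_ge0 //.
  have := sqr_ge0 (be - 1); lra.
have hv2 : 2 * ((1 + gh) * W ^+ 4 * be ^+ 3) <= 4 * (1 + gh) * (1 + W ^+ 4) * be ^+ 3.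
  have -> : 2 * ((1 + gh) * W ^+ 4 * be ^+ 3) = ((1 + gh) * be ^+ 3) * (2 * W ^+ 4) by ring.
  have -> : 4 * (1 + gh) * (1 + W ^+ 4) * be ^+ 3 = ((1 + gh) * be ^+ 3) * (4 * (1 + W ^+ 4)) by ring.
  have gh0 : 0 <= gh by have := sqr_ge0 be; lra.
  have : 0 <= W ^+ 4 by rewrite exprn_ge0.
  move=> w4; rewrite ler_wpM2l ?mulr_ge0 //; lra.
lra.
Qed.

Lemma core32 (R : realType) (al be ga A B W eb gh E : R) :
  0 <= al -> al <= eb -> 0 <= be -> be ^+ 2 <= gh -> 0 <= A -> 0 <= B -> 0 <= W ->
  0 <= ga -> ga ^+ 2 = A + W * B ->
  0 <= E -> E <= al ^+ 2 * (A + W * B) + be ^+ 2 * W ^+ 2 ->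
  E * Num.sqrt E <= 8 * (1 + eb) * (1 + W ^+ 2) * al ^+ 3 * (1 + A ^+ 2 + B ^+ 2)
            + 4 * (1 + gh) * (1 + W ^+ 4) * be ^+ 3.
Proof.
move=> a0 ae b0 bg A0 B0 W0 g0 gE E0 EE.
have h := @sqrt_sum R E (al * ga) (be * W) (mulr_ge0 a0 g0) (mulr_ge0 b0 W0) E0.
have h' : E * Num.sqrt E <= 2 * (al ^+ 3 * ga ^+ 3 + be ^+ 3 * W ^+ 3).
  rewrite -!exprMn; apply: h; rewrite !exprMn gE //.
apply: (le_trans h').
have a3 : 0 <= al ^+ 3 by rewrite exprn_ge0.
have b3 : 0 <= be ^+ 3 by rewrite exprn_ge0.
have hg := @gsq R A B W A0 B0 W0.
have c1 : ga ^+ 3 <= 1 + (A + W * B) ^+ 2.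
  by rewrite -gE -exprM; apply: (@cube_le R).
have c2 : W ^+ 3 <= 1 + W ^+ 4 by apply: (@cube_le R).
have e0 : 0 <= eb by lra.
have gh0 : 0 <= gh by have := sqr_ge0 be; lra.
have w2 : 0 <= W ^+ 2 by exact: sqr_ge0.
have A2 : 0 <= A ^+ 2 by exact: sqr_ge0.
have B2 : 0 <= B ^+ 2 by exact: sqr_ge0.
have w4 : 0 <= W ^+ 4 by exact: exprn_ge0.
have t1 : ga ^+ 3 <= 8 * (1 + eb) * (1 + W ^+ 2) * (1 + A ^+ 2 + B ^+ 2) / 2.
  apply: (le_trans c1).
  set Y := (1 + W ^+ 2) * (1 + A ^+ 2 + B ^+ 2).
  have YE : Y = (1 + W ^+ 2) * (A ^+ 2 + B ^+ 2) + (1 + W ^+ 2) by rewrite /Y; ring.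
  have -> : 8 * (1 + eb) * (1 + W ^+ 2) * (1 + A ^+ 2 + B ^+ 2) / 2 = 4 * Y + 4 * (eb * Y).
    by rewrite /Y; field.
  have Y0 : 0 <= eb * Y by rewrite mulr_ge0 // /Y mulr_ge0 //; lra.
  have Z0 : 0 <= (1 + W ^+ 2) * (A ^+ 2 + B ^+ 2) by rewrite mulr_ge0 //; lra.
  have hg' : (A + W * B) ^+ 2 <= 2 * ((1 + W ^+ 2) * (A ^+ 2 + B ^+ 2)) by rewrite mulrA.
  lra.
have t2 : W ^+ 3 <= 4 * (1 + gh) * (1 + W ^+ 4) / 2.
  apply: (le_trans c2); nra.
have := ler_wpM2l a3 t1; have := ler_wpM2l b3 t2.
lra.
Qed.

Lemma e2_bound (R : realType) (d1 d2 u v wv W : R) : `|wv| <= W ->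
  `|d1 * (u + wv * v) + d2 * `|wv| * wv| <= `|d1| * (`|u| + W * `|v|) + `|d2| * W ^+ 2.
Proof.
move=> hw.
have W0 : 0 <= W by apply: le_trans hw.
apply: (le_trans (ler_normD _ _)); rewrite !normrM normr_id.
apply: lerD.
  rewrite ler_wpM2l //; apply: (le_trans (ler_normD _ _)); rewrite normrM lerD2l.
  by rewrite ler_wpM2r.
rewrite -mulrA ler_wpM2l // expr2; exact: ler_pM.
Qed.

Lemma pt (R : realType) (a b A B W eb gh E : R) :
  0 <= a -> a <= eb ^+ 2 -> 0 <= eb -> 0 <= b -> b <= gh -> 0 <= A -> 0 <= B -> 0 <= W ->
  0 <= E -> E <= a * (A + W * B) + b * W ^+ 2 ->
  E `^ 2 <= (8 * (1 + eb) * (1 + W ^+ 2) * a `^ (3/2)) * (1 + A `^ 2 + B `^ 2)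
            + (4 * (1 + gh) * (1 + W ^+ 4)) * b `^ (3/2) /\
  E `^ (3/2) <= (8 * (1 + eb) * (1 + W ^+ 2) * a `^ (3/2)) * (1 + A `^ 2 + B `^ 2)
            + (4 * (1 + gh) * (1 + W ^+ 4)) * b `^ (3/2).
Proof.
move=> a0 ae e0 b0 bg A0 B0 W0 E0 EE.
have aE : a = (Num.sqrt a) ^+ 2 by rewrite sqr_sqrtr.
have bE : b = (Num.sqrt b) ^+ 2 by rewrite sqr_sqrtr.
have al_e : Num.sqrt a <= eb.
  rewrite -(ger0_norm e0) -sqrtr_sqr ler_sqrt //; exact: sqr_ge0.
rewrite (@pow32E R a a0) (@pow32E R b b0) (@pow2E R A A0) (@pow2E R B B0).
have EE' : E <= (Num.sqrt a) ^+ 2 * (A + W * B) + (Num.sqrt b) ^+ 2 * W ^+ 2.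
  by rewrite -aE -bE.
split.
  rewrite (@pow2E R E E0); apply: (@core2 R) => //; try exact: sqrtr_ge0; by rewrite -bE.
rewrite (@pow32E R E E0).
have -> : (Num.sqrt E) ^+ 3 = E * Num.sqrt E.
  have sE := sqr_sqrtr E0; set s := Num.sqrt E in sE *; by rewrite -sE; ring.
apply: (@core32 R _ _ (Num.sqrt (A + W * B))) => //; try exact: sqrtr_ge0; try by rewrite -bE.
rewrite sqr_sqrtr //; apply: addr_ge0 => //; exact: mulr_ge0.
Qed.

Lemma mpow (R : realType) (D : set R) (p : R) (f : R -> R) :
  measurable_fun D f -> measurable_fun D (fun x => ((`|f x| `^ p)%:E)%E).
Proof.
move=> mf; apply/(measurable_EFinP D (fun x => `|f x| `^ p)).
apply: (measurableT_comp (measurable_powR p)).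
exact: (measurableT_comp (@normr_measurable R setT) mf).
Qed.

Lemma int_bound (R : realType) (l c1 c3 Mt Mx p : R) (f g h : R -> R) :
  0 < l -> 0 <= c1 -> 0 <= c3 ->
  measurable_fun `]0, l[ f -> measurable_fun `]0, l[ g -> measurable_fun `]0, l[ h ->
  (Lp_pow l 2 g <= (Mt ^+ 2)%:E)%E -> (Lp_pow l 2 h <= (Mx ^+ 2)%:E)%E ->
  (forall x, x \in `]0, l[ -> `|f x| `^ p <= c1 * (1 + `|g x| `^ 2 + `|h x| `^ 2) + c3) ->
  (Lp_pow l p f <= (c1 * (l + Mt ^+ 2 + Mx ^+ 2) + c3 * l)%:E)%E.
Proof.
move=> l0 c10 c30 mf mg mh Ig Ih Hp.
have mD : measurable (`]0, l[%classic : set R) by exact: measurable_itv.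
rewrite /Lp_pow.
pose F := fun x : R => (((c1 + c3)%:E) + ((c1%:E * (`|g x| `^ 2)%:E) + (c1%:E * (`|h x| `^ 2)%:E)))%E.
have le1 : (\int[@lebesgue_measure R]_(x in `]0%R, l[%classic) ((`|f x| `^ p)%:E)
   <= \int[@lebesgue_measure R]_(x in `]0%R, l[%classic) F x)%E.
  apply: ge0_le_integral => //; try (by move=> x _; rewrite lee_fin powR_ge0); try exact: mpow.
  - rewrite /F; apply: emeasurable_funD; first exact: measurable_cst.
    apply: emeasurable_funD; apply: emeasurable_funM => //; try exact: measurable_cst; exact: mpow.
  - move=> x Dx; rewrite /F -!EFinM -!EFinD lee_fin.
    have Hx := Hp x Dx; lra.
apply: (le_trans le1); rewrite /F.
have mZ : forall k (u : R -> R), measurable_fun `]0, l[ u ->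
    measurable_fun `]0, l[ (fun x => (k%:E * (`|u x| `^ 2)%:E)%E).
  by move=> k u mu; apply: emeasurable_funM => //; try exact: measurable_cst; exact: mpow.
have pZ : forall u : R -> R, forall x, `]0, l[%classic x -> (0 <= c1%:E * (`|u x| `^ 2)%:E)%E.
  by move=> u x _; rewrite mule_ge0 // lee_fin powR_ge0.
rewrite ge0_integralD //; last first.
- by apply: emeasurable_funD; apply: mZ.
- by move=> x Dx; rewrite adde_ge0 //; apply: pZ.
- by move=> x _; rewrite lee_fin; lra.
rewrite ge0_integralD //; try exact: pZ; try exact: mZ.
rewrite ge0_integralZl //; try (by move=> x _; rewrite lee_fin powR_ge0); try exact: mpow; try by rewrite lee_fin.
rewrite ge0_integralZl //; try (by move=> x _; rewrite lee_fin powR_ge0); try exact: mpow; try by rewrite lee_fin.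
have ic := integral_cst (@lebesgue_measure R) mD (c1 + c3)%:E; rewrite /cst /= in ic; rewrite ic lebesgue_measure_itv /= lte_fin l0 oppr0 adde0.
have c1E : (0 <= c1%:E)%E by rewrite lee_fin.
have h1 := lee_wpmul2l c1E Ig.
have h2 := lee_wpmul2l c1E Ih.
apply: le_trans (leeD (lexx _) (leeD h1 h2)) _.
rewrite -!EFinM -!EFinD lee_fin; lra.
Qed.

Theorem corollary4p6 (R : realType)
  (l wbar epsbar gamlo gamhi C1 C2 C3 Mt Mx : R) :
  0 < l -> 0 < wbar -> 0 < epsbar -> 0 < gamlo -> gamlo <= gamhi ->
  0 <= C1 -> 0 <= C2 -> 0 <= C3 -> 0 <= Mt -> 0 <= Mx ->
  exists C3' C3'' : R, 0 <= C3' /\ 0 <= C3'' /\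
  forall (T eps heps gam hgam : R) (w wt wx : R -> R -> R),
    0 < T ->
    0 <= eps <= epsbar -> 0 <= heps <= epsbar ->
    gamlo <= gam <= gamhi -> gamlo <= hgam <= gamhi ->
    (forall t x, t \in `[0, T] -> x \in `]0, l[ -> `|w t x| <= wbar) ->
    weak_partials T l w wt wx ->
    (* d_tau w, d_x w in L^oo(0,T; L^2(0,l)) with norms <= Mt, Mx *)
    {ae @lebesgue_measure R, forall t, t \in `[0, T] ->
       measurable_fun `]0, l[ (w t) /\
       measurable_fun `]0, l[ (wt t) /\ measurable_fun `]0, l[ (wx t) /\
       (Lp_pow l 2 (wt t) <= (Mt ^+ 2)%:E)%E /\
       (Lp_pow l 2 (wx t) <= (Mx ^+ 2)%:E)%E} ->
    {ae @lebesgue_measure R, forall t, t \in `[0, T] ->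
       (Pe l C1 C2 C3 (resid_e1 w wt wx t)
                      (resid_e2 eps heps gam hgam w wt wx t)
        <= (C3' * `|eps ^+ 2 - heps ^+ 2| `^ (3 / 2)
            + C3'' * `|gam - hgam| `^ (3 / 2))%:E)%E}.
Proof.
move=> l0 W0 e0 g0 gg C10 C20 C30 Mt0 Mx0.
pose KA := 8 * (1 + epsbar) * (1 + wbar ^+ 2).
pose KB := 4 * (1 + gamhi) * (1 + wbar ^+ 4).
have w2 : 0 <= wbar ^+ 2 by exact: sqr_ge0.
have KA0 : 0 <= KA by rewrite /KA !mulr_ge0 //; lra.
have w4 : 0 <= wbar ^+ 4 by rewrite exprn_ge0 // ltW.
have KB0 : 0 <= KB by rewrite /KB !mulr_ge0 //; lra.
have Mt2 : 0 <= Mt ^+ 2 by exact: sqr_ge0.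
have Mx2 : 0 <= Mx ^+ 2 by exact: sqr_ge0.
exists ((C2 + C3) * (KA * (l + Mt ^+ 2 + Mx ^+ 2))), ((C2 + C3) * (KB * l)).
split; first by rewrite !mulr_ge0 //; lra.
split; first by rewrite !mulr_ge0 //; lra.
move=> T eps heps gam hgam w wt wx T0 /andP[ep0 ep1] /andP[hp0 hp1] /andP[ga0 ga1]
  /andP[hg0 hg1] Hw _ Hae.
apply: filterS Hae; first exact: (ae_filter_ringOfSetsType (@lebesgue_measure R)).
move=> t Ht tin.
have [mw [mwt [mwx [It Ix]]]] := Ht tin.
set a := `|eps ^+ 2 - heps ^+ 2|.
set b := `|gam - hgam|.
have ha : a <= epsbar ^+ 2.
  have h1 : eps ^+ 2 <= epsbar ^+ 2 by rewrite ler_pXn2r ?nnegrE //; lra.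
  have h2 : heps ^+ 2 <= epsbar ^+ 2 by rewrite ler_pXn2r ?nnegrE //; lra.
  have := sqr_ge0 eps; have := sqr_ge0 heps.
  rewrite /a ler_norml; move=> *; apply/andP; split; lra.
have hb : b <= gamhi by rewrite /b ler_norml; apply/andP; split; lra.
have a0 : 0 <= a by exact: normr_ge0.
have b0 : 0 <= b by exact: normr_ge0.
pose c1 := KA * a `^ (3/2).
pose c3 := KB * b `^ (3/2).
have c10 : 0 <= c1 by rewrite /c1 mulr_ge0 // powR_ge0.
have c30 : 0 <= c3 by rewrite /c3 mulr_ge0 // powR_ge0.
have Hpt : forall x, x \in `]0, l[ ->
    `|resid_e2 eps heps gam hgam w wt wx t x| `^ 2 <=
      c1 * (1 + `|wt t x| `^ 2 + `|wx t x| `^ 2) + c3 /\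
    `|resid_e2 eps heps gam hgam w wt wx t x| `^ (3/2) <=
      c1 * (1 + `|wt t x| `^ 2 + `|wx t x| `^ 2) + c3.
  move=> x xin; rewrite /c1 /c3 /KA /KB.
  apply: (@pt R a b (`|wt t x|) (`|wx t x|) wbar epsbar gamhi) => //; try lra.
  rewrite /resid_e2 /a /b; exact: e2_bound (Hw t x tin xin).
have me : measurable_fun `]0, l[ (resid_e2 eps heps gam hgam w wt wx t).
  rewrite /resid_e2; apply: measurable_funD.
    apply: measurable_funM; first exact: measurable_cst.
    by apply: measurable_funD => //; apply: measurable_funM.
  apply: measurable_funM => //; apply: measurable_funM; first exact: measurable_cst.
  exact: (measurableT_comp (@normr_measurable R setT) mw).
have I2 := @int_bound R l c1 c3 Mt Mx 2 _ _ _ l0 c10 c30 me mwt mwx It Ix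
  (fun x xin => (Hpt x xin).1).
have I32 := @int_bound R l c1 c3 Mt Mx (3/2) _ _ _ l0 c10 c30 me mwt mwx It Ix
  (fun x xin => (Hpt x xin).2).
rewrite /Pe.
have -> : Lp_pow l 2 (resid_e1 w wt wx t) = 0%E.
  rewrite /Lp_pow /resid_e1 normr0 powR0 //; exact: integral0.
rewrite mule0 add0e.
have C2E : (0 <= C2%:E)%E by rewrite lee_fin.
have C3E : (0 <= C3%:E)%E by rewrite lee_fin.
apply: le_trans (leeD (lee_wpmul2l C2E I2) (lee_wpmul2l C3E I32)) _.
rewrite -!EFinM -EFinD lee_fin le_eqVlt; apply/orP; left; apply/eqP.
rewrite /c1 /c3; ring.
Qed.
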